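(* The $2\times 2$ chessboard $C=[-1,0]\times[-1,0]\,\cup\,[0,1]\times[0,1]\subset\mathbb{R}^2$ is neither drawable nor closed-disk drawable.
   Context: For $A\subseteq\mathbb{R}^2$ let $N(A)=\{x\in\mathbb{R}^2: |x-a|<1 \text{ for some } a\in A\}$ and $N_{\le}(A)=\{x\in\mathbb{R}^2: |x-a|\le 1 \text{ for some } a\in A\}$. Let $\mathcal{D}_1=\{N(A_1): A_1\subseteq\mathbb{R}^2\}$ and for $n\ge 2$ let $\mathcal{D}_n=\{D\cup N(A_n): D\in\mathcal{D}_{n-1}, A_n\subseteq\mathbb{R}^2\}$ if $n$ is odd and $\mathcal{D}_n=\{D\setminus N(A_n): D\in\mathcal{D}_{n-1}, A_n\subseteq\mathbb{R}^2\}$ if $n$ is even. A set is drawable if it lies in $\mathcal{D}=\bigcup_{n\ge1}\mathcal{D}_n$. The collection $\mathcal{D}_{\le}$ of closed-disk drawable sets is defined in the same way with every $N(\cdot)$ replaced by $N_{\le}(\cdot)$. *)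

(* Defs.v *)
From Stdlib Require Import Reals.
Open Scope R_scope.

Definition pt := (R * R)%type.
Definition pset := pt -> Prop.

Definition dist2 (x a : pt) : R :=
  sqrt ((fst x - fst a) ^ 2 + (snd x - snd a) ^ 2).

Definition Nopen (A : pset) : pset := fun x => exists a, A a /\ dist2 x a < 1.
Definition Nclosed (A : pset) : pset := fun x => exists a, A a /\ dist2 x a <= 1.

(* Dcol Nf n S  <->  S belongs to D_n (built with neighbourhood operator Nf).
   D_0 is empty (n starts at 1); set equality is extensional. *)
Fixpoint Dcol (Nf : pset -> pset) (n : nat) (S : pset) : Prop :=
  match n with
  | O => False
  | 1%nat => exists A : pset, forall x, S x <-> Nf A x
  | S m =>
      exists (D A : pset), Dcol Nf m D /\
        forall x, S x <-> (if Nat.odd n then (D x \/ Nf A x) else (D x /\ ~ Nf A x))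
  end.

Definition drawable (S : pset) : Prop := exists n : nat, Dcol Nopen n S.
Definition closed_disk_drawable (S : pset) : Prop := exists n : nat, Dcol Nclosed n S.

Definition chessboard : pset := fun x =>
  (-1 <= fst x <= 0 /\ -1 <= snd x <= 0) \/ (0 <= fst x <= 1 /\ 0 <= snd x <= 1).

(* Main.v *)
Require Import Defs.
From Stdlib Require Import Reals Lra Psatz Classical.
Open Scope R_scope.

Lemma prod_bound x y e : -2 <= x <= 2 -> Rabs y <= e -> x * y <= 2 * e.
Proof. intros Hx Hy. unfold Rabs in Hy; destruct (Rcase_abs y); nra. Qed.

Lemma wit cx cy qx qy s : 0 < s -> s <= 1/20 -> Rabs qx <= s/32 -> Rabs qy <= s/32 ->
  (qx - cx)^2 + (qy - cy)^2 <= 1 ->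
  exists u v, ((1 <= u <= 2 /\ 1 <= v <= 2) \/ (-2 <= u <= -1 /\ -2 <= v <= -1)) /\
   ((s*u - cx)^2 + (s*v - cy)^2 < 1 \/
    (s*u - cx)^2 + (s*v - cy)^2 <= (qx - cx)^2 + (qy - cy)^2).
Proof.
  intros Hs Hs1 Hqx Hqy Hd.
  assert (Hax : Rabs qx <= 1/640) by lra.
  assert (Hay : Rabs qy <= 1/640) by lra.
  assert (Hcx : -2 <= cx <= 2).
  { assert ((qx - cx)^2 <= 1) by (pose proof (pow2_ge_0 (qy - cy)); lra).
    assert (-1 <= qx - cx <= 1) by (split; nra).
    unfold Rabs in Hax; destruct (Rcase_abs qx); split; lra. }
  assert (Hcy : -2 <= cy <= 2).
  { assert ((qy - cy)^2 <= 1) by (pose proof (pow2_ge_0 (qx - cx)); lra).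
    assert (-1 <= qy - cy <= 1) by (split; nra).
    unfold Rabs in Hay; destruct (Rcase_abs qy); split; lra. }
  pose proof (prod_bound cx qx (s/32) Hcx Hqx) as P1.
  pose proof (prod_bound (-cx) qx (s/32) ltac:(lra) Hqx) as P1'.
  pose proof (prod_bound cy qy (s/32) Hcy Hqy) as P2.
  pose proof (prod_bound (-cy) qy (s/32) ltac:(lra) Hqy) as P2'.
  assert (Hq2 : 0 <= qx^2 + qy^2) by nra.
  assert (H5 : 5 * s^2 <= s / 4) by nra.
  destruct (Rle_lt_dec (1/4) (cx + cy)) as [L|L1].
  { exists 1, 1. split; [lra|]. right. nra. }
  destruct (Rle_lt_dec (1/4) (-(cx + cy))) as [L|L2].
  { exists (-1), (-1). split; [lra|]. right. nra. }
  destruct (Rle_lt_dec (1/4) (cx + 2*cy)) as [L|L3].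
  { exists 1, 2. split; [lra|]. right. nra. }
  destruct (Rle_lt_dec (1/4) (2*cx + cy)) as [L|L4].
  { exists 2, 1. split; [lra|]. right. nra. }
  destruct (Rle_lt_dec (1/4) (-(cx + 2*cy))) as [L|L5].
  { exists (-1), (-2). split; [lra|]. right. nra. }
  destruct (Rle_lt_dec (1/4) (-(2*cx + cy))) as [L|L6].
  { exists (-2), (-1). split; [lra|]. right. nra. }
  exists 1, 1. split; [lra|]. left.
  assert (-1/2 < s*1 - cx < 1/2) by lra.
  assert (-1/2 < s*1 - cy < 1/2) by lra.
  nra.
Qed.

Lemma d2_lt x a : dist2 x a < 1 <-> (fst x - fst a)^2 + (snd x - snd a)^2 < 1.
Proof.
  unfold dist2. split; intro H.
  - rewrite <- sqrt_1 in H. apply sqrt_lt_0_alt in H. exact H.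
  - rewrite <- sqrt_1. apply sqrt_lt_1_alt. split; [pose proof (pow2_ge_0 (fst x - fst a)); pose proof (pow2_ge_0 (snd x - snd a)); lra|exact H].
Qed.

Lemma d2_le x a : dist2 x a <= 1 <-> (fst x - fst a)^2 + (snd x - snd a)^2 <= 1.
Proof.
  unfold dist2. split; intro H.
  - rewrite <- sqrt_1 in H. apply sqrt_le_0 in H; [exact H|pose proof (pow2_ge_0 (fst x - fst a)); pose proof (pow2_ge_0 (snd x - snd a)); lra|lra].
  - rewrite <- sqrt_1. apply sqrt_le_1_alt. exact H.
Qed.

Definition sgn (u v : R) := (1 <= u <= 2 /\ 1 <= v <= 2) \/ (-2 <= u <= -1 /\ -2 <= v <= -1).

Definition good (Nf : pset -> pset) := forall A s qx qy, 0 < s -> s <= 1/20 ->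
  Rabs qx <= s/32 -> Rabs qy <= s/32 -> Nf A (qx,qy) ->
  (exists u v, sgn u v /\ Nf A (s*u, s*v)) /\ (exists u v, sgn u v /\ Nf A (-(s*v), s*u)).

Lemma good_open : good Nopen.
Proof.
  intros A s qx qy Hs Hs1 Hx Hy [a [Ha Hd]]. apply d2_lt in Hd. cbn [fst snd] in Hd.
  split.
  - destruct (wit (fst a) (snd a) qx qy s Hs Hs1 Hx Hy ltac:(lra)) as [u [v [Hu Hw]]].
    exists u, v. split; [exact Hu|]. exists a. split; [exact Ha|]. apply d2_lt. cbn [fst snd]. lra.
  - assert (Hx' : Rabs (-qx) <= s/32) by (rewrite Rabs_Ropp; exact Hx).
    destruct (wit (snd a) (- fst a) qy (-qx) s Hs Hs1 Hy Hx' ltac:(nra)) as [u [v [Hu Hw]]].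
    exists u, v. split; [exact Hu|]. exists a. split; [exact Ha|]. apply d2_lt. cbn [fst snd].
    destruct Hw; nra.
Qed.

Lemma good_closed : good Nclosed.
Proof.
  intros A s qx qy Hs Hs1 Hx Hy [a [Ha Hd]]. apply d2_le in Hd. cbn [fst snd] in Hd.
  split.
  - destruct (wit (fst a) (snd a) qx qy s Hs Hs1 Hx Hy ltac:(lra)) as [u [v [Hu Hw]]].
    exists u, v. split; [exact Hu|]. exists a. split; [exact Ha|]. apply d2_le. cbn [fst snd]. lra.
  - assert (Hx' : Rabs (-qx) <= s/32) by (rewrite Rabs_Ropp; exact Hx).
    destruct (wit (snd a) (- fst a) qy (-qx) s Hs Hs1 Hy Hx' ltac:(nra)) as [u [v [Hu Hw]]].
    exists u, v. split; [exact Hu|]. exists a. split; [exact Ha|]. apply d2_le. cbn [fst snd].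
    destruct Hw; nra.
Qed.

Definition inv (S : pset) (r : R) := forall x y, Rabs x <= r -> Rabs y <= r ->
  (S (x,y) <-> chessboard (x,y)).

Lemma abs_le x r : -r <= x <= r -> Rabs x <= r.
Proof. intros H. unfold Rabs; destruct (Rcase_abs x); lra. Qed.

Lemma sgn_bound s u r : 0 < s -> 2 * s <= r -> -2 <= u <= 2 -> Rabs (s*u) <= r.
Proof. intros. apply abs_le. split; nra. Qed.

Lemma sgn_C s u v : 0 < s -> s <= 1/20 -> sgn u v -> chessboard (s*u, s*v).
Proof. intros Hs Hs1 [[H1 H2]|[H1 H2]]; unfold chessboard; simpl; [right|left]; split; split; nra. Qed.

Lemma sgn_nC s u v : 0 < s -> sgn u v -> ~ chessboard (-(s*v), s*u).
Proof. intros Hs [[H1 H2]|[H1 H2]]; unfold chessboard; simpl; intros [[[? ?] [? ?]]|[[? ?] [? ?]]]; nra. Qed.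

Lemma sgn_rng u v : sgn u v -> -2 <= u <= 2 /\ -2 <= v <= 2.
Proof. intros [[? ?]|[? ?]]; lra. Qed.

Lemma main Nf : good Nf -> forall n S r, 0 < r -> Dcol Nf n S -> ~ inv S r.
Proof.
  intros G n. induction n as [|n IH]; intros S r Hr HD HI; [exact HD|].
  set (s := Rmin (r/2) (1/20)).
  assert (Hs : 0 < s) by (apply Rmin_pos; lra).
  assert (Hs1 : s <= 1/20) by apply Rmin_r.
  assert (Hs2 : 2 * s <= r) by (pose proof (Rmin_l (r/2) (1/20)); unfold s; lra).
  destruct n as [|m].
  - destruct HD as [A HA].
    assert (H0 : Nf A (0,0)).
    { apply HA. apply HI; [rewrite Rabs_R0; lra | rewrite Rabs_R0; lra |].
      left; simpl; lra. }
    assert (Hz : Rabs 0 <= s/32) by (rewrite Rabs_R0; lra).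
    destruct (G A s 0 0 Hs Hs1 Hz Hz H0) as [_ [u [v [Hu HN]]]].
    destruct (sgn_rng u v Hu).
    apply (sgn_nC s u v Hs Hu). apply HI.
    + rewrite <- Rabs_Ropp, Ropp_involutive. apply sgn_bound; lra.
    + apply sgn_bound; lra.
    + apply HA. exact HN.
  - destruct HD as [D [A [HD HS]]].
    apply (IH D (s/32) ltac:(lra) HD).
    intros x y Hx Hy.
    assert (Hx' : Rabs x <= r) by lra.
    assert (Hy' : Rabs y <= r) by lra.
    specialize (HI x y Hx' Hy') as HIxy.
    destruct (Nat.odd (Datatypes.S (Datatypes.S m))).
    + split.
      * intro Hd. apply HIxy, HS. left; exact Hd.
      * intro Hc. apply HIxy, HS in Hc. destruct Hc as [Hc|Hc]; [exact Hc|].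
        exfalso.
        destruct (G A s x y Hs Hs1 Hx Hy Hc) as [_ [u [v [Hu HN]]]].
        destruct (sgn_rng u v Hu).
        apply (sgn_nC s u v Hs Hu). apply HI.
        -- rewrite <- Rabs_Ropp, Ropp_involutive. apply sgn_bound; lra.
        -- apply sgn_bound; lra.
        -- apply HS. right. exact HN.
    + split.
      * intro Hd. destruct (classic (Nf A (x,y))) as [Hn|Hn].
        -- exfalso.
           destruct (G A s x y Hs Hs1 Hx Hy Hn) as [[u [v [Hu HN]]] _].
           destruct (sgn_rng u v Hu).
           assert (HC := sgn_C s u v Hs Hs1 Hu).
           apply HI in HC; [| apply sgn_bound; lra | apply sgn_bound; lra].
           apply HS in HC. destruct HC as [_ HC]. exact (HC HN).
        -- apply HIxy, HS. split; assumption.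
      * intro Hc. apply HIxy, HS in Hc. exact (proj1 Hc).
Qed.

Theorem theorem1p1 : ~ drawable chessboard /\ ~ closed_disk_drawable chessboard.
Proof.
  assert (Hc : inv chessboard 1) by (intros x y _ _; tauto).
  split; intros [n Hn].
  - exact (main Nopen good_open n chessboard 1 ltac:(lra) Hn Hc).
  - exact (main Nclosed good_closed n chessboard 1 ltac:(lra) Hn Hc).
Qed.
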